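(* Let $R$ be a ring, $P$ a polygon, $D$ a dissection of $P$, and $c:\operatorname{diag}P\to R$ a map. The following are equivalent: (i) $c$ is a weak frieze with respect to $D$; (ii) $c_{tv}\in R^*$ for every $(t,v)\in D$, and for all distinct vertices $i,k$ of $P$, \[ c_{ik}=\sum_{p\in\mathscr{P}(D,i,k)} c_p . \]
   Context: $R^*$ denotes the set of invertible elements of $R$. A polygon $P$ is a finite set $V$ of at least three vertices with a cyclic ordering, thought of as geometrically realised as a convex polygon in the plane. $\operatorname{diag}P$ is the set of ordered pairs $(i,k)$ of distinct vertices (diagonals); $(i,k)$ is an edge if $i,k$ are neighbours in the cyclic order, otherwise an internal diagonal. Diagonals $(i,k)$ and $(j,\ell)$ cross if $i,j,k,\ell$ are pairwise distinct and $i<j<k<\ell$ or $i<\ell<k<j$ in the cyclic order. A dissection of $P$ is a set $D$ of internal diagonals such that $(i,k)\in D$ implies $(k,i)\in D$, and no two diagonals in $D$ cross. We write $c_{ik}=c(i,k)$ and use the convention $c_{xx}=0$. A map $c:\operatorname{diag}P\to R$ is a weak frieze with respect to $D$ if (1) $c_{tv}\in R^*$ for all $(t,v)\in D$, and (2) whenever $(i,k)$ crosses $(t,v)$ with $(t,v),(v,t)\in D$, one has $c_{ik}=c_{it}c_{vt}^{-1}c_{vk}+c_{iv}c_{tv}^{-1}c_{tk}$. A sequence $(p_1,\ldots,p_\pi)$ of vertices is a $T$-path from $p_1$ to $p_\pi$ with respect to $D$ if: $p_1\neq p_\pi$; the sets $\{p_1,p_2\},\{p_2,p_3\},\ldots,\{p_{\pi-1},p_\pi\}$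 are pairwise different and each has two elements; no diagonal $(p_\alpha,p_{\alpha+1})$ crosses a diagonal in $D$; each diagonal $(p_{2\alpha},p_{2\alpha+1})$ lies in $D$ and crosses $(p_1,p_\pi)$, and these crossing points progress monotonically in the direction from $p_1$ to $p_\pi$. (Then $\pi$ is even.) $\mathscr{P}(D,i,k)$ denotes the set of $T$-paths from $i$ to $k$ with respect to $D$. For such a $T$-path $p$ (assuming $c_{tv}\in R^*$ for $(t,v)\in D$), $c_p=c_{p_1p_2}c_{p_3p_2}^{-1}c_{p_3p_4}c_{p_5p_4}^{-1}\cdots c_{p_{\pi-1}p_{\pi-2}}^{-1}c_{p_{\pi-1}p_\pi}$. *)

(* Defs.v *)
From HB Require Import structures.
From mathcomp Require Import all_boot all_order all_algebra.
Set Implicit Arguments. Unset Strict Implicit. Unset Printing Implicit Defensive.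
Import GRing.Theory.
Local Open Scope ring_scope.

(* A polygon with n vertices: the vertex set 'I_n with the cyclic order
   0 -> 1 -> ... -> n-1 -> 0. *)

Definition cyc3 (n : nat) (a b c : 'I_n) : bool :=
  [|| ((a < b)%N && (b < c)%N), ((b < c)%N && (c < a)%N)
    | ((c < a)%N && (a < b)%N)].

Definition cyc4 (n : nat) (a b c d : 'I_n) : bool :=
  cyc3 a b c && cyc3 a c d.

Definition cross (n : nat) (i k j l : 'I_n) : bool :=
  uniq [:: i; j; k; l] && (cyc4 i j k l || cyc4 i l k j).

Definition neighbours (n : nat) (i k : 'I_n) : bool :=
  ((val k == (val i).+1 %% n)%N) || ((val i == (val k).+1 %% n)%N).

Definition internal_diag (n : nat) (i k : 'I_n) : bool :=
  (i != k) && ~~ neighbours i k.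

Definition dissection (n : nat) (D : {set 'I_n * 'I_n}) : Prop :=
  [/\ forall t v, (t, v) \in D -> internal_diag t v,
      forall t v, (t, v) \in D -> (v, t) \in D
    & forall t v t' v', (t, v) \in D -> (t', v') \in D -> ~~ cross t v t' v'].

Definition weak_frieze (R : unitRingType) (n : nat) (D : {set 'I_n * 'I_n})
    (c : 'I_n -> 'I_n -> R) : Prop :=
  (forall t v, (t, v) \in D -> c t v \is a GRing.unit) /\
  (forall i k t v, (t, v) \in D -> (v, t) \in D -> cross i k t v ->
     c i k = c i t * (c v t)^-1 * c v k + c i v * (c t v)^-1 * c t k).

(* Combinatorial rendering of "the crossing point of diagonal (a,b) with the
   diagonal (s,e) comes strictly before (in direction s -> e) the crossing
   point of (a',b') with (s,e)", for non-crossing diagonals (a,b), (a',b')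
   both crossing (s,e): every endpoint of (a',b') not on (a,b) lies on the
   same side of (a,b) as e. *)
Definition crosses_before (n : nat) (e a b a' b' : 'I_n) : bool :=
  all (fun y => (y \in [:: a; b]) || (cyc3 a y b == cyc3 a e b)) [:: a'; b'].

(* p = [:: p_1; ...; p_pi] (0-indexed in Rocq: p_(j+1) = nth i p j)
   is a T-path from i to k with respect to D. *)
Definition Tpath (n : nat) (D : {set 'I_n * 'I_n}) (i k : 'I_n)
    (p : seq 'I_n) : bool :=
  let q j := nth i p j in
  let L := (size p).-1 in
  [&& (0 < size p)%N, q 0%N == i, q L == k, i != k,
      all (fun a => q a != q a.+1) (iota 0 L),
      uniq [seq [set q a; q a.+1] | a <- iota 0 L],
      all (fun a => [forall d in D, ~~ cross (q a) (q a.+1) d.1 d.2])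
          (iota 0 L),
      (* each (p_(2al), p_(2al+1)) lies in D and crosses (p_1, p_pi) *)
      all (fun a => odd a ==> (((q a, q a.+1) \in D) && cross (q a) (q a.+1) i k))
          (iota 0 L)
    &
      all (fun a => all (fun b => (odd a && odd b) ==>
             crosses_before k (q a) (q a.+1) (q b) (q b.+1))
             (iota a.+1 (L - a.+1))) (iota 0 L)].

Definition Tweight (R : unitRingType) (n : nat) (c : 'I_n -> 'I_n -> R)
    (i : 'I_n) (p : seq 'I_n) : R :=
  \prod_(j < (size p).-1)
     (if odd j then (c (nth i p j.+1) (nth i p j))^-1
      else c (nth i p j) (nth i p j.+1)).

(* A T-path has pairwise different
   edges {p_a,p_(a+1)}, so its length is at most n(n-1)/2 + 1 < n*n + 2;
   hence enumerating tuples of length < n*n+2 enumerates all T-paths, each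
   exactly once. *)
Definition Tsum (R : unitRingType) (n : nat) (D : {set 'I_n * 'I_n})
    (c : 'I_n -> 'I_n -> R) (i k : 'I_n) : R :=
  \sum_(m < (n * n).+2) \sum_(t : m.-tuple 'I_n | Tpath D i k t) Tweight c i t.

(* Main.v *)
Require Import Defs.
From HB Require Import structures.
From mathcomp Require Import all_boot all_order all_algebra.
Set Implicit Arguments. Unset Strict Implicit. Unset Printing Implicit Defensive.

Definition c3 (a b c : nat) : bool :=
  [|| ((a < b) && (b < c)), ((b < c) && (c < a)) | ((c < a) && (a < b))].
Definition c4 a b c d := c3 a b c && c3 a c d.
Definition cr i k j l := [&& i != j, i != k, i != l, j != k, j != l, k != l & (c4 i j k l || c4 i l k j)].
Definition cb (e a b a' b' : nat) : bool :=
  ((a' == a) || (a' == b) || (c3 a a' b == c3 a e b)) &&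
  ((b' == a) || (b' == b) || (c3 a b' b == c3 a e b)).

Definition rk (S : seq nat) (x : nat) := count (fun y => y < x) S.

Lemma rk_le S x y : x <= y -> rk S x <= rk S y.
Proof. move=> h; rewrite /rk; apply: sub_count => z /= hz; exact: leq_trans hz h. Qed.

Lemma rk_lt1 S x y : x < y -> x \in S -> rk S x < rk S y.
Proof.
move=> hxy; elim: S => //= a S IH; rewrite inE /rk /= => /orP[/eqP<-|h].
  by rewrite ltnn hxy add0n add1n ltnS; apply: rk_le; apply: ltnW.
have := IH h; rewrite /rk => h2.
case: (ltnP a x) => h3; first by rewrite (ltn_trans h3 hxy).
by case: (a < y); rewrite ?add0n ?add1n // ltnW.
Qed.

Lemma rk_lt S x y : x \in S -> y \in S -> (rk S x < rk S y) = (x < y).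
Proof.
move=> hx hy; case: (ltnP x y) => h; first exact: rk_lt1.
by apply/negbTE; rewrite -leqNgt; apply: rk_le.
Qed.

Lemma rk_eq S x y : x \in S -> y \in S -> (rk S x == rk S y) = (x == y).
Proof.
move=> hx hy; case: (ltngtP x y) => h.
- by apply/negbTE; rewrite neq_ltn rk_lt1.
- by apply/negbTE; rewrite neq_ltn (rk_lt1 h) ?orbT.
- by rewrite h eqxx.
Qed.

Lemma rk_bd S x : x \in S -> rk S x < size S.
Proof.
rewrite /rk; elim: S => //= a S IH; rewrite inE => /orP[/eqP->|h].
  by rewrite ltnn add0n ltnS count_size.
have := IH h; case: (a < x) => h2; rewrite ?add1n ?add0n ?ltnS //; exact: ltnW.
Qed.

Section Tr.
Variable S : seq nat.
Notation f := (rk S).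
Lemma c3f a b c : a \in S -> b \in S -> c \in S -> c3 (f a) (f b) (f c) = c3 a b c.
Proof. by move=> ha hb hc; rewrite /c3 !rk_lt. Qed.
Lemma crf a b c d : a \in S -> b \in S -> c \in S -> d \in S -> cr (f a) (f b) (f c) (f d) = cr a b c d.
Proof. by move=> ha hb hc hd; rewrite /cr /c4 !c3f // !rk_eq. Qed.
Lemma cbf a b c d e : a \in S -> b \in S -> c \in S -> d \in S -> e \in S -> cb (f a) (f b) (f c) (f d) (f e) = cb a b c d e.
Proof. by move=> ha hb hc hd he; rewrite /cb !c3f // !rk_eq. Qed.
End Tr.

Definition all6 (G : nat -> nat -> nat -> nat -> nat -> nat -> bool) :=
  all (fun y1 => all (fun y2 => all (fun y3 => all (fun y4 => all (fun y5 => all (fun y6 => G y1 y2 y3 y4 y5 y6) (iota 0 6)) (iota 0 6)) (iota 0 6)) (iota 0 6)) (iota 0 6)) (iota 0 6).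

Lemma transport6 (G : nat -> nat -> nat -> nat -> nat -> nat -> bool) :
  all6 G ->
  (forall x1 x2 x3 x4 x5 x6, let S := [:: x1; x2; x3; x4; x5; x6] in
     x1 \in S -> x2 \in S -> x3 \in S -> x4 \in S -> x5 \in S -> x6 \in S ->
     G (rk S x1) (rk S x2) (rk S x3) (rk S x4) (rk S x5) (rk S x6) = G x1 x2 x3 x4 x5 x6) ->
  forall x1 x2 x3 x4 x5 x6, G x1 x2 x3 x4 x5 x6.
Proof.
move=> H inv x1 x2 x3 x4 x5 x6.
set S := [:: x1; x2; x3; x4; x5; x6].
have m1 : x1 \in S by rewrite !inE eqxx ?orbT.
have m2 : x2 \in S by rewrite !inE eqxx ?orbT.
have m3 : x3 \in S by rewrite !inE eqxx ?orbT.
have m4 : x4 \in S by rewrite !inE eqxx ?orbT.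
have m5 : x5 \in S by rewrite !inE eqxx ?orbT.
have m6 : x6 \in S by rewrite !inE eqxx ?orbT.
have mi : forall u, u \in S -> rk S u \in iota 0 6 by move=> u hu; have := @rk_bd S u hu; rewrite mem_iota.
rewrite -(inv _ _ _ _ _ _ m1 m2 m3 m4 m5 m6).
exact: (allP (allP (allP (allP (allP (allP H _ (mi _ m1)) _ (mi _ m2)) _ (mi _ m3)) _ (mi _ m4)) _ (mi _ m5)) _ (mi _ m6)).
Qed.

Definition all7 (G : nat -> nat -> nat -> nat -> nat -> nat -> nat -> bool) :=
  all (fun y1 => all (fun y2 => all (fun y3 => all (fun y4 => all (fun y5 => all (fun y6 => all (fun y7 => G y1 y2 y3 y4 y5 y6 y7) (iota 0 7)) (iota 0 7)) (iota 0 7)) (iota 0 7)) (iota 0 7)) (iota 0 7)) (iota 0 7).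

Lemma transport7 (G : nat -> nat -> nat -> nat -> nat -> nat -> nat -> bool) :
  all7 G ->
  (forall x1 x2 x3 x4 x5 x6 x7, let S := [:: x1; x2; x3; x4; x5; x6; x7] in
     x1 \in S -> x2 \in S -> x3 \in S -> x4 \in S -> x5 \in S -> x6 \in S -> x7 \in S ->
     G (rk S x1) (rk S x2) (rk S x3) (rk S x4) (rk S x5) (rk S x6) (rk S x7) = G x1 x2 x3 x4 x5 x6 x7) ->
  forall x1 x2 x3 x4 x5 x6 x7, G x1 x2 x3 x4 x5 x6 x7.
Proof.
move=> H inv x1 x2 x3 x4 x5 x6 x7.
set S := [:: x1; x2; x3; x4; x5; x6; x7].
have m1 : x1 \in S by rewrite !inE eqxx ?orbT.
have m2 : x2 \in S by rewrite !inE eqxx ?orbT.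
have m3 : x3 \in S by rewrite !inE eqxx ?orbT.
have m4 : x4 \in S by rewrite !inE eqxx ?orbT.
have m5 : x5 \in S by rewrite !inE eqxx ?orbT.
have m6 : x6 \in S by rewrite !inE eqxx ?orbT.
have m7 : x7 \in S by rewrite !inE eqxx ?orbT.
have mi : forall u, u \in S -> rk S u \in iota 0 7 by move=> u hu; have := @rk_bd S u hu; rewrite mem_iota.
rewrite -(inv _ _ _ _ _ _ _ m1 m2 m3 m4 m5 m6 m7).
exact: (allP (allP (allP (allP (allP (allP (allP H _ (mi _ m1)) _ (mi _ m2)) _ (mi _ m3)) _ (mi _ m4)) _ (mi _ m5)) _ (mi _ m6)) _ (mi _ m7)).
Qed.

Ltac geo G := apply: transport6; [by vm_compute | move=> x1 x2 x3 x4 x5 x6 S m1 m2 m3 m4 m5 m6; rewrite /G ?crf ?cbf ?c3f ?rk_eq //].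
Ltac geo7 G := apply: transport7; [by vm_compute | move=> x1 x2 x3 x4 x5 x6 x7 S m1 m2 m3 m4 m5 m6 m7; rewrite /G ?crf ?cbf ?c3f ?rk_eq //].

Definition G1 (x k y z a b : nat) := cr x k y z ==> cr x k a b ==> ~~ cr y z a b ==> cb k y z a b ==> (z != a) ==> (z != b) ==> cr z k a b.
Lemma gl1 : forall x k y z a b, G1 x k y z a b.
Proof. geo G1. Qed.
Definition G2 (i k t v a b : nat) := cr i k t v ==> ~~ cr t v a b ==> cr v k a b ==> cr i k a b.
Lemma gl2 : forall i k t v a b, G2 i k t v a b.
Proof. geo G2. Qed.
Definition G3 (i k t v x u : nat) := cr i k t v ==> ~~ cr t v i x ==> ~~ cr v k i x.
Lemma gl3 : forall i k t v x u, G3 i k t v x u.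
Proof. geo G3. Qed.
Definition G4 (i k t v a b : nat) := cr i k t v ==> ~~ cr t v a b ==> cb k t v a b ==> ~~ cr i t a b.
Lemma gl4 : forall i k t v a b, G4 i k t v a b.
Proof. geo G4. Qed.
Definition G6 (i k t v y z : nat) := cr i k t v ==> cr i k y z ==> cb k t v y z ==> ~~ cr t v y z ==> ~~ cr i y t v ==> (y != i) ==> (y == t) || (y == v).
Lemma gl6 : forall i k t v y z, G6 i k t v y z.
Proof. geo G6. Qed.
Definition Gs (i k t v a b : nat) := cr i k t v ==> cr i k a b ==> ~~ cr t v a b ==> cb k t v a b ==> (v != a) ==> (v != b) ==> (c3 a v b != c3 a k b).
Lemma gls : forall i k t v a b, Gs i k t v a b.
Proof. geo Gs. Qed.
Definition Gex (k a b a' b' v : nat) := cb k a b a' b' ==> (v != a) ==> (v != b) ==> (c3 a v b != c3 a k b) ==> (v != a') && (v != b').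
Lemma glex : forall k a b a' b' v, Gex k a b a' b' v.
Proof. geo Gex. Qed.
Definition G7 (i k t1 v1 t v : nat) := cr i k t1 v1 ==> cr i k t v ==> ~~ cr t1 v1 t v ==> cb k t1 v1 t v ==> (t != t1) ==> (t != v1) ==> cr i t t1 v1.
Lemma gl7 : forall i k t1 v1 t v, G7 i k t1 v1 t v.
Proof. geo G7. Qed.
Definition G8 (i k t v a b : nat) := cr i k t v ==> ~~ cr t v a b ==> cr i t a b ==> cr i k a b.
Lemma gl8 : forall i k t v a b, G8 i k t v a b.
Proof. geo G8. Qed.
Definition Gcb (k t v a b u : nat) := (k != t) ==> (k != v) ==> (t != v) ==> (cb k t v a b == cb k v t a b).
Lemma glcb : forall k t v a b u, Gcb k t v a b u.
Proof. geo Gcb. Qed.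
Definition Gcr (a b c d u w : nat) := (cr a b c d == cr c d a b) && (cr a b c d == cr b a c d) && (cr a b c d == cr a b d c).
Lemma glcr : forall a b c d u w, Gcr a b c d u w.
Proof. geo Gcr. Qed.
Definition Gm2 (i k t v a b : nat) := cr i k t v ==> ~~ cb k t v a b ==> ((a != t) && (a != v) && (c3 t a v == c3 t i v)) || ((b != t) && (b != v) && (c3 t b v == c3 t i v)).
Lemma glm2 : forall i k t v a b, Gm2 i k t v a b.
Proof. geo Gm2. Qed.
Definition Gm (i k t v a b x : nat) := cr i k t v ==> cr i k a b ==> ~~ cr t v a b ==> ~~ cb k t v a b ==> (x != a) ==> (x != b) ==> (c3 a x b == c3 a i b) ==> (x != t) && (x != v) && (c3 t x v == c3 t i v).
Lemma glm : forall i k t v a b x, Gm i k t v a b x.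
Proof. geo7 Gm. Qed.

Import GRing.Theory.

Section Ord.
Variable n : nat.
Implicit Types i k t v a b x y z : 'I_n.

Lemma crossE i k j l : cross i k j l = cr i k j l.
Proof.
rewrite /cross /cr /= !inE -!val_eqE /= !negb_or.
rewrite /cyc4 /cyc3 /c4 /c3.
case: (val i == val j); case: (val i == val k); case: (val i == val l); case: (val j == val k); case: (val j == val l); case: (val k == val l) => //=.
Qed.

Lemma cbE e a b a' b' : crosses_before e a b a' b' = cb e a b a' b'.
Proof. by rewrite /crosses_before /cb /= !inE -!val_eqE /= andbT. Qed.

End Ord.

Section Lists.
Variable T : Type.

Fixpoint oddel (s : seq T) : seq T :=
  match s with _ :: e :: s' => e :: oddel s' | _ => [::] end.

Lemma oddel_map (F : nat -> T) L m : ~~ odd m ->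
  oddel (map F (iota m L)) = map F [seq a <- iota m L | odd a].
Proof.
elim/ltn_ind: L m => L IH m hm.
case: L IH => [|[|L]] IH /=; first by [].
  by rewrite (negbTE hm).
rewrite (negbTE hm) /=; congr (_ :: _).
by apply: IH => //=; rewrite negbK.
Qed.

Lemma pairwise_iota (C : T -> T -> bool) (F : nat -> T) L m :
  pairwise C (map F [seq a <- iota m L | odd a]) =
  all (fun a => all (fun b => (odd a && odd b) ==> C (F a) (F b)) (iota a.+1 (m + L - a.+1))) (iota m L).
Proof.
elim: L m => [|L IH] m //=.
rewrite addnS -addSn -IH subSS addKn.
case: (odd m) => /=; last first.
  by rewrite (@eq_all _ _ predT) ?all_predT.
congr (_ && _).
by rewrite all_map all_filter; apply: eq_all => b /=.
Qed.

Lemma all_odd_iota (P : T -> bool) (F : nat -> T) L :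
  all P (oddel (map F (iota 0 L))) = all (fun a => odd a ==> P (F a)) (iota 0 L).
Proof. by rewrite oddel_map // all_map all_filter. Qed.

End Lists.

Lemma pairmapE (T : Type) (y x : T) (s : seq T) :
  pairmap pair x s = map (fun a => (nth y (x :: s) a, nth y (x :: s) a.+1)) (iota 0 (size s)).
Proof.
elim: s x => [|z s IH] x //=.
rewrite IH -[1]/(1 + 0)%N iotaDl -map_comp.
by congr (_ :: _); apply: eq_map => a.
Qed.

Section Paths.
Variable n : nat.
Variable D : {set 'I_n * 'I_n}.

Definition steps (p : seq 'I_n) : seq ('I_n * 'I_n) :=
  if p is x :: s then pairmap pair x s else [::].
Definition ncD (e : 'I_n * 'I_n) := [forall d in D, ~~ cross e.1 e.2 d.1 d.2].
Definition eset (e : 'I_n * 'I_n) : {set 'I_n} := [set e.1; e.2].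
Definition diagOK (i k : 'I_n) (e : 'I_n * 'I_n) := (e \in D) && cross e.1 e.2 i k.
Definition cbk (k : 'I_n) (e e' : 'I_n * 'I_n) := crosses_before k e.1 e.2 e'.1 e'.2.

Definition TP (i k : 'I_n) (p : seq 'I_n) : bool :=
  if p is x :: s then
  [&& x == i, last x s == k, i != k, all (fun e => e.1 != e.2) (steps p),
      uniq (map eset (steps p)), all ncD (steps p),
      all (diagOK i k) (oddel (steps p)) & pairwise (cbk k) (oddel (steps p))]
  else false.

Lemma TpathE i k p : Tpath D i k p = TP i k p.
Proof.
case: p => [|x s] //.
rewrite /Tpath /TP /= (pairmapE i) /=.
rewrite !all_map -map_comp all_odd_iota.
have -> : nth i (x :: s) (size s) = last x s.
  by rewrite -[size s]/((size (x :: s)).-1) nth_last.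
by rewrite oddel_map // pairwise_iota add0n.
Qed.

End Paths.
Arguments steps {n}.
Arguments ncD {n}.
Arguments eset {n}.
Arguments diagOK {n}.
Arguments cbk {n}.
Arguments TP {n}.

Section Weight.
Local Open Scope ring_scope.
Variable R : unitRingType.
Variable n : nat.
Variable c : 'I_n -> 'I_n -> R.

Fixpoint wl (s : seq ('I_n * 'I_n)) : R :=
  match s with
  | e :: e' :: s' => c e.1 e.2 * (c e'.2 e'.1)^-1 * wl s'
  | [:: e] => c e.1 e.2
  | [::] => 1
  end.

Lemma wl_iota (F : nat -> 'I_n * 'I_n) L m : ~~ odd m ->
  \prod_(j <- iota m L) (if odd j then (c (F j).2 (F j).1)^-1 else c (F j).1 (F j).2)
  = wl (map F (iota m L)).
Proof.
elim/ltn_ind: L m => L IH m hm.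
case: L IH => [|[|L]] IH /=; first by rewrite big_nil.
  by rewrite big_cons big_nil (negbTE hm) mulr1.
by rewrite !big_cons (negbTE hm) /= hm mulrA IH //= negbK.
Qed.

Lemma TweightE x p : Tweight c x p = wl (steps p).
Proof.
case: p => [|y s]; first by rewrite /Tweight big_ord0.
rewrite /Tweight /= (pairmapE x) -wl_iota //.
rewrite -(big_mkord xpredT (fun j => if odd j then (c (nth x (y :: s) j.+1) (nth x (y :: s) j))^-1 else c (nth x (y :: s) j) (nth x (y :: s) j.+1))) /index_iota subn0.
by apply: eq_bigr.
Qed.

Lemma wl_cons2 e e' s : wl (e :: e' :: s) = c e.1 e.2 * (c e'.2 e'.1)^-1 * wl s.
Proof. by []. Qed.

End Weight.
Arguments wl {R n}.

Section Enum.
Variable n : nat.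

Definition Etup (m : nat) : seq (seq 'I_n) := [seq val t | t <- enum {: m.-tuple 'I_n}].
Definition AllS (N : nat) : seq (seq 'I_n) := flatten [seq Etup m | m <- iota 0 N].

Lemma mem_Etup m s : (s \in Etup m) = (size s == m).
Proof.
apply/mapP/idP => [[t _ ->]|/eqP hs]; first by rewrite size_tuple.
by exists (Tuple (introT eqP hs)); rewrite ?mem_enum.
Qed.

Lemma uniq_Etup m : uniq (Etup m).
Proof. by rewrite map_inj_uniq ?enum_uniq //; apply: val_inj. Qed.

Lemma mem_AllS N s : (s \in AllS N) = (size s < N).
Proof.
rewrite /AllS; apply/flattenP/idP => [[r /mapP[m hm ->]]|hs].
  by rewrite mem_Etup => /eqP ->; move: hm; rewrite mem_iota.
exists (Etup (size s)); last by rewrite mem_Etup.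
by apply/mapP; exists (size s); rewrite ?mem_iota.
Qed.

Lemma uniq_AllS N : uniq (AllS N).
Proof.
rewrite /AllS; elim: N => [|N IH] //.
rewrite -addn1 iotaD map_cat flatten_cat cat_uniq IH /= cats0 uniq_Etup andbT.
apply/hasP => -[s hs /flattenP[r /mapP[m hm ->]]].
move: hs hm; rewrite mem_Etup !mem_iota add0n => /eqP hs.
move=> /andP[_ hm]; rewrite mem_Etup hs => /eqP e.
by rewrite -e ltnn in hm.
Qed.

Variable R : unitRingType.
Variable D : {set 'I_n * 'I_n}.
Variable c : 'I_n -> 'I_n -> R.
Local Open Scope ring_scope.

Definition NN := ((n * n).+2)%N.

Lemma Tsum_seq i k :
  Tsum D c i k = \sum_(p <- AllS NN | TP D i k p) wl c (steps p).
Proof.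
rewrite /Tsum /AllS big_flatten big_map -(big_mkord xpredT (fun m => \sum_(t : m.-tuple 'I_n | Tpath D i k t) Tweight c i t)) /index_iota subn0.
apply: eq_bigr => m _.
rewrite big_map big_enum_cond; apply: congr_big => // [t|t _].
  by rewrite inE TpathE.
by rewrite TweightE.
Qed.

End Enum.

Section OGeo.
Variable n : nat.
Implicit Types i k t v a b x y z : 'I_n.

Ltac prep := rewrite ?crossE ?cbE -?val_eqE.

Lemma oG1 x k y z a b : cross x k y z -> cross x k a b -> ~~ cross y z a b ->
  crosses_before k y z a b -> z != a -> z != b -> cross z k a b.
Proof. prep => h1 h2 h3 h4 h5 h6; have := gl1 x k y z a b; by rewrite /G1 h1 h2 h3 h4 h5 h6. Qed.

Lemma oG2 i k t v a b : cross i k t v -> ~~ cross t v a b -> cross v k a b -> cross i k a b.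
Proof. prep => h1 h2 h3; have := gl2 i k t v a b; by rewrite /G2 h1 h2 h3. Qed.

Lemma oG3 i k t v x : cross i k t v -> ~~ cross t v i x -> ~~ cross v k i x.
Proof. prep => h1 h2; have := gl3 i k t v x 0; by rewrite /G3 h1 h2. Qed.

Lemma oG4 i k t v a b : cross i k t v -> ~~ cross t v a b -> crosses_before k t v a b -> ~~ cross i t a b.
Proof. prep => h1 h2 h3; have := gl4 i k t v a b; by rewrite /G4 h1 h2 h3. Qed.

Lemma oG6 i k t v y z : cross i k t v -> cross i k y z -> crosses_before k t v y z ->
  ~~ cross t v y z -> ~~ cross i y t v -> y != i -> (y == t) || (y == v).
Proof. prep => h1 h2 h3 h4 h5 h6; have := gl6 i k t v y z; by rewrite /G6 h1 h2 h3 h4 h5 h6. Qed.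

Lemma oGs i k t v a b : cross i k t v -> cross i k a b -> ~~ cross t v a b ->
  crosses_before k t v a b -> v != a -> v != b -> cyc3 a v b != cyc3 a k b.
Proof. prep => h1 h2 h3 h4 h5 h6; have := gls i k t v a b; by rewrite /Gs h1 h2 h3 h4 h5 h6. Qed.

Lemma oGex k a b a' b' v : crosses_before k a b a' b' -> v != a -> v != b ->
  cyc3 a v b != cyc3 a k b -> (v != a') && (v != b').
Proof. prep => h1 h2 h3 h4; have := glex k a b a' b' v; by rewrite /Gex h1 h2 h3 h4. Qed.

Lemma oG7 i k t1 v1 t v : cross i k t1 v1 -> cross i k t v -> ~~ cross t1 v1 t v ->
  crosses_before k t1 v1 t v -> t != t1 -> t != v1 -> cross i t t1 v1.
Proof. prep => h1 h2 h3 h4 h5 h6; have := gl7 i k t1 v1 t v; by rewrite /G7 h1 h2 h3 h4 h5 h6. Qed.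

Lemma oG8 i k t v a b : cross i k t v -> ~~ cross t v a b -> cross i t a b -> cross i k a b.
Proof. prep => h1 h2 h3; have := gl8 i k t v a b; by rewrite /G8 h1 h2 h3. Qed.

Lemma cbS k t v a b : k != t -> k != v -> t != v ->
  crosses_before k t v a b = crosses_before k v t a b.
Proof. prep => h1 h2 h3; have := glcb k t v a b 0; by rewrite /Gcb h1 h2 h3 => /eqP. Qed.

Lemma crossC a b c d : cross a b c d = cross c d a b.
Proof. prep; have := glcr a b c d 0 0; by rewrite /Gcr => /andP[/andP[/eqP]]. Qed.
Lemma crossSl a b c d : cross a b c d = cross b a c d.
Proof. prep; have := glcr a b c d 0 0; by rewrite /Gcr => /andP[/andP[_ /eqP]]. Qed.
Lemma crossSr a b c d : cross a b c d = cross a b d c.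
Proof. prep; have := glcr a b c d 0 0; by rewrite /Gcr => /andP[_ /eqP]. Qed.

Lemma cross_neq a b c d : cross a b c d ->
  [&& a != b, a != c, a != d, b != c, b != d & c != d].
Proof. rewrite crossE /cr -!val_eqE. by case/andP=> h1 /andP[h2 /andP[h3 /andP[h4 /andP[h5 /andP[h6 _]]]]]; rewrite h1 h2 h3 h5 h6 (eq_sym (val b)) h4. Qed.

Lemma oGm2 i k t v a b : cross i k t v -> ~~ crosses_before k t v a b ->
  ((a != t) && (a != v) && (cyc3 t a v == cyc3 t i v)) || ((b != t) && (b != v) && (cyc3 t b v == cyc3 t i v)).
Proof. prep => h1 h2; have := glm2 i k t v a b; by rewrite /Gm2 h1 h2. Qed.

Lemma oGm i k t v a b x : cross i k t v -> cross i k a b -> ~~ cross t v a b ->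
  ~~ crosses_before k t v a b -> x != a -> x != b -> cyc3 a x b == cyc3 a i b ->
  (x != t) && (x != v) && (cyc3 t x v == cyc3 t i v).
Proof. prep => h1 h2 h3 h4 h5 h6 h7; have := glm i k t v a b x; by rewrite /Gm h1 h2 h3 h4 h5 h6 h7. Qed.

End OGeo.

Section Comb.
Variable n : nat.
Variable D : {set 'I_n * 'I_n}.
Hypothesis hD : dissection D.
Implicit Types i k t v a b x y z : 'I_n.
Implicit Types p q s r : seq 'I_n.

Lemma steps2 x y s : steps (x :: y :: s) = (x, y) :: steps (y :: s).
Proof. by []. Qed.

Lemma mem_steps x s e : e \in steps (x :: s) -> (e.1 \in x :: s) && (e.2 \in s).
Proof.
elim: s x => [|y s IH] x //=; rewrite inE => /orP[/eqP->|].
  by rewrite /= !inE !eqxx ?orbT.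
move/IH => /andP[h1 h2]; rewrite !inE.
by move: h1 h2; rewrite !inE => -> ->; rewrite !orbT.
Qed.

Lemma VL x s y : y \in s -> (y == last x s) ||
  has (fun e => (y == e.1) || (y == e.2)) (oddel (steps (x :: s))).
Proof.
move: {2}(size s) (leqnn (size s)) => m; elim: m x s => [|m IH] x s.
  by case: s.
case: s => [|y1 [|y2 s]] //= hs.
  rewrite inE => /orP[/eqP->|]; first by rewrite eqxx !orbT.
rewrite inE => /orP[/eqP->|hy]; first by rewrite eqxx !orbT.
have hs' : size s <= m by move: hs; rewrite ltnS => /ltnW.
by have /orP[->|->] := IH y2 s hs' hy; rewrite ?orbT.
Qed.


Lemma Dsym t v : (t, v) \in D -> (v, t) \in D.
Proof. by case: hD => _ h _; apply: h. Qed.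

Lemma Dnc t v a b : (t, v) \in D -> (a, b) \in D -> ~~ cross t v a b.
Proof. by case: hD => _ _ h; apply: h. Qed.

Lemma Dnc' d d' : d \in D -> d' \in D -> ~~ cross d.1 d.2 d'.1 d'.2.
Proof. by case: d d' => [t v] [a b]; apply: Dnc. Qed.

Lemma D_ncD t v : (t, v) \in D -> ncD D (t, v).
Proof. by move=> h; apply/forall_inP => d hd; apply: Dnc' h hd. Qed.

Lemma TPE i k x s : TP D i k (x :: s) = [&& x == i, last x s == k, i != k,
      all (fun e => e.1 != e.2) (steps (x :: s)),
      uniq (map eset (steps (x :: s))), all (ncD D) (steps (x :: s)),
      all (diagOK D i k) (oddel (steps (x :: s))) & pairwise (cbk k) (oddel (steps (x :: s)))].
Proof. by []. Qed.

Section TPproj.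
Variables (i k x : 'I_n) (s : seq 'I_n).
Hypothesis h : TP D i k (x :: s).
Let hh := h.
Lemma TP_hd : x = i.
Proof. by move: hh; rewrite TPE => /and3P[/eqP]. Qed.
Lemma TP_last : last x s = k.
Proof. by move: hh; rewrite TPE => /and3P[_ /eqP]. Qed.
Lemma TP_ik : i != k.
Proof. by move: hh; rewrite TPE => /and3P[_ _ /and5P[]]. Qed.
Lemma TP_ne : all (fun e => e.1 != e.2) (steps (x :: s)).
Proof. by move: hh; rewrite TPE => /and3P[_ _ /and5P[]]. Qed.
Lemma TP_u : uniq (map eset (steps (x :: s))).
Proof. by move: hh; rewrite TPE => /and3P[_ _ /and5P[]]. Qed.
Lemma TP_nc : all (ncD D) (steps (x :: s)).
Proof. by move: hh; rewrite TPE => /and3P[_ _ /and5P[]]. Qed.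
Lemma TP_dg : all (diagOK D i k) (oddel (steps (x :: s))).
Proof. by move: hh; rewrite TPE => /and3P[_ _ /and5P[_ _ _ _ /andP[]]]. Qed.
Lemma TP_pw : pairwise (cbk k) (oddel (steps (x :: s))).
Proof. by move: hh; rewrite TPE => /and3P[_ _ /and5P[_ _ _ _ /andP[]]]. Qed.
End TPproj.

Lemma notin_path v k s x : TP D v k (v :: s) -> x != k ->
  (forall d, d \in oddel (steps (v :: s)) -> (x != d.1) && (x != d.2)) -> x \notin s.
Proof.
rewrite TPE => /andP[_ /andP[/eqP hl _]] hxk hd; apply/negP => hx.
have /orP[] := VL v hx; first by rewrite hl (negbTE hxk).
by case/hasP => d /hd /andP[/negbTE -> /negbTE ->].
Qed.

Lemma head_notin v k s : TP D v k (v :: s) -> v \notin s.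
Proof.
move=> h; apply: (notin_path h); first exact: TP_ik h.
move=> d hd; have /andP[_] := allP (TP_dg h) d hd.
by move/cross_neq => /and5P[_ h1 _ h2 _]; rewrite !(eq_sym v) h1 h2.
Qed.

Definition first i k t v := [&& (t, v) \in D, cross i k t v &
  [forall d in D, cross i k d.1 d.2 ==> crosses_before k t v d.1 d.2]].

Lemma first_sym i k t v : first i k t v -> first i k v t.
Proof.
case/and3P => htv hc /forall_inP hf; apply/and3P; split; first exact: Dsym.
  by rewrite crossSr.
have /and5P[_ _ _ hkt /andP[hkv htv']] := cross_neq hc.
by apply/forall_inP => d hd; apply/implyP => hc2; rewrite -cbS //; exact: (implyP (hf d hd)) hc2.
Qed.

Definition fA i t p := if nth i p 1 == t then i :: behead p else i :: t :: p.


Lemma eset_notin x e0 (L : seq ('I_n * 'I_n)) :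
  (forall e, e \in L -> (x != e.1) && (x != e.2)) -> x \in eset e0 -> eset e0 \notin map eset L.
Proof.
move=> hL hx; apply/mapP => -[e he heq]; move: hx; rewrite heq /eset !inE.
by have /andP[/negbTE -> /negbTE ->] := hL e he.
Qed.

Lemma notin_steps x v s : x \notin v :: s -> forall e, e \in steps (v :: s) -> (x != e.1) && (x != e.2).
Proof.
move=> hx e /mem_steps /andP[h1 h2]; apply/andP; split; apply/negP => /eqP e1.
  by move: hx; rewrite e1 h1.
by move: hx; rewrite e1 inE h2 orbT.
Qed.

Lemma sound i k t v p : first i k t v -> TP D v k p -> TP D i k (fA i t p).
Proof.
case/and3P => htv hc /forall_inP hf.
have /and5P[hik hit hiv hkt /andP[hkv htv']] := cross_neq hc.
case: p => [|x s] // hp.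
have hx := TP_hd hp; subst x.
have F1 : forall d, d \in oddel (steps (v :: s)) -> diagOK D i k d.
  move=> d hd; have /andP[hdD hdc] := allP (TP_dg hp) d hd.
  rewrite /diagOK hdD /= crossC; apply: (oG2 hc); first exact: (Dnc' htv hdD).
  by rewrite crossC.
have F2 : forall d, d \in oddel (steps (v :: s)) -> cbk k (t, v) d.
  move=> d hd; have /andP[hdD hdc] := F1 d hd.
  by apply: (implyP (hf d hdD)); rewrite crossC.
have F3 : i \notin v :: s.
  rewrite inE negb_or hiv /=; apply: (notin_path hp) => //.
  move=> [a b] hd; have /andP[hdD /= hdc] := allP (TP_dg hp) _ hd.
  apply/andP; split; apply/negP => /eqP e; rewrite -e in hdD hdc.
    have := oG3 hc (Dnc htv hdD); by rewrite crossC hdc.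
  have := oG3 hc (Dnc htv (Dsym hdD)); by rewrite crossC crossSl hdc.
have F3' := notin_steps F3.
have F4 : ncD D (i, t).
  apply/forall_inP => d hd /=; apply/negP => hx.
  have h8 := oG8 hc (Dnc' htv hd) hx.
  by have := oG4 hc (Dnc' htv hd) ((implyP (hf d hd)) h8); rewrite hx.
case: s hp F1 F2 F3 F3' => [|y s] hp F1 F2 F3 F3'.
  by move: (TP_last hp) hkv => /= ->; rewrite eqxx.
rewrite /fA /=; case: (eqVneq y t) => [eyt|nyt].
  subst y; case: s hp F1 F2 F3 F3' => [|w s] hp F1 F2 F3 F3'.
    by move: (TP_last hp) hkt => /= ->; rewrite eqxx.
  have hne := TP_ne hp; have hu := TP_u hp; have hnc := TP_nc hp; have hpw := TP_pw hp.
  rewrite !steps2 /= in hne hu hnc hpw F1.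
  have hl : last w s = k := TP_last hp.
  rewrite TPE !steps2 /= eqxx hl eqxx hik hit.
  move: hne hu hnc => /andP[_ ->] /andP[_ ->] /andP[_ ->].
  rewrite F4 hpw /= !andbT.
  apply/andP; split.
    apply: (@eset_notin i _ ((t, w) :: pairmap pair w s)) => [e he|]; last by rewrite /eset !inE eqxx.
    by apply: F3'; rewrite /= inE he orbT.
  apply/andP; split; first by apply: F1; rewrite mem_head.
  by apply/allP => d hd; apply: F1; rewrite inE hd orbT.
have hne := TP_ne hp; have hu := TP_u hp; have hnc := TP_nc hp; have hpw := TP_pw hp.
have hl : last y s = k := TP_last hp.
rewrite TPE steps2 steps2.
have hd1 : diagOK D i k (t, v) by rewrite /diagOK htv crossC hc.
have hu2 : eset (i, t) \notin map eset ((t, v) :: steps (v :: y :: s)).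
  apply: (@eset_notin i) => [e|]; last by rewrite /eset !inE eqxx.
  rewrite inE => /orP[/eqP->|he]; first by rewrite /= hit hiv.
  exact: F3'.
have hu3 : eset (t, v) \notin map eset (steps (v :: y :: s)).
  rewrite steps2 map_cons inE negb_or; apply/andP; split.
    apply/negP => /eqP heq; have : t \in eset (t, v) by rewrite /eset !inE eqxx.
    by rewrite heq /eset !inE (negbTE htv') eq_sym (negbTE nyt).
  apply: (@eset_notin v) => [e he|]; last by rewrite /eset !inE eqxx orbT.
  exact: (notin_steps (head_notin hp)).
have hpw2 : all (cbk k (t, v)) (oddel (steps (v :: y :: s))) by apply/allP.
have hdg2 : all (diagOK D i k) (oddel (steps (v :: y :: s))) by apply/allP.
move: hne hu hnc hpw hu2 hu3 hpw2 hdg2; rewrite /= => -> -> -> -> -> -> -> ->.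
rewrite eqxx hl eqxx hik hit htv' F4 (D_ncD htv) hd1.
by [].
Qed.


Lemma firststep i k t v q : first i k t v -> TP D i k q -> (nth i q 1 == t) || (nth i q 1 == v).
Proof.
case/and3P => htv hc /forall_inP hf.
have /and5P[hik hit hiv hkt /andP[hkv htv']] := cross_neq hc.
case: q => [|x s] // hq; have hx := TP_hd hq; subst x.
case: s hq => [|y s] hq; first by move: (TP_last hq) hik => /= ->; rewrite eqxx.
case: s hq => [|z s] hq.
  have hyk : y = k := TP_last hq.
  have := TP_nc hq; rewrite /= andbT => /forall_inP /(_ _ htv) /=.
  by rewrite hyk hc.
have := TP_dg hq; rewrite steps2 steps2 /= => /andP[/andP[hyz /= hcyz] _].
have := TP_nc hq; rewrite steps2 /= => /andP[/forall_inP /(_ _ htv) /= hiy _].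
have := TP_ne hq; rewrite steps2 /= => /andP[hiy' _].
apply: (oG6 hc _ _ (Dnc htv hyz) hiy); first by rewrite crossC.
  by apply: (implyP (hf _ hyz)); rewrite crossC.
by rewrite eq_sym.
Qed.

Lemma complete i k t v q : first i k t v -> TP D i k q -> nth i q 1 == t ->
  exists2 p, TP D v k p & q = fA i t p.
Proof.
case/and3P => htv hc /forall_inP hf.
have /and5P[hik hit hiv hkt /andP[hkv htv']] := cross_neq hc.
case: q => [|x s] // hq; have hx := TP_hd hq; subst x.
case: s hq => [|y s] hq /=; first by rewrite (negbTE hit).
move/eqP => eyt; subst y.
case: s hq => [|z r] hq; first by move: (TP_last hq) hkt => /= ->; rewrite eqxx.
have hl : last z r = k := TP_last hq.
have := TP_dg hq; rewrite steps2 steps2 /= => /andP[/andP[htz /= hctz] hdg].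
have := TP_pw hq; rewrite steps2 steps2 /= => /andP[hpw1 hpw].
have hne := TP_ne hq; have hu := TP_u hq; have hnc := TP_nc hq.
rewrite steps2 steps2 in hne hu hnc.
have hcd : forall d, d \in oddel (steps (z :: r)) -> (d \in D) && cross i k d.1 d.2.
  by move=> d hd; have /andP[-> /=] := allP hdg d hd; rewrite crossC.
case: (eqVneq z v) => [ezv|nzv].
  subst z.
  have noret : forall d, d \in oddel (steps (v :: r)) -> (v != d.1) && (v != d.2).
    case: r hq hl hne hu hnc hdg hpw hpw1 hcd => [|a [|b r']] // hq hl hne hu hnc hdg hpw hpw1 hcd.
    rewrite steps2 steps2 /= in hne hu hpw hpw1 hcd *.
    have /and4P[_ _ hva _] := hne.
    have hvb : v != b.
      apply/negP => /eqP ebv; have e : eset (a, v) = eset (v, a) by rewrite /eset setUC.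
      by move: hu; rewrite -ebv e => /and5P[_ _]; rewrite inE eqxx.
    have /andP[habD habc] := hcd (a, b) (mem_head _ _).
    have /andP[hcb1 hcb2] := hpw1; have /andP[hpa _] := hpw.
    have hs := oGs hc habc (Dnc htv habD) hcb1 hva hvb.
    move=> d; rewrite inE => /orP[/eqP->|hd]; first by rewrite /= hva hvb.
    exact: oGex (allP hpa d hd) hva hvb hs.
  have hne' : all (fun e => e.1 != e.2) (steps (v :: r)) by move: hne => /andP[_ /andP[_ h]].
  have hu' : uniq (map eset (steps (v :: r))) by move: hu => /andP[_ /andP[_ h]].
  have hnc' : all (ncD D) (steps (v :: r)) by move: hnc => /andP[_ /andP[_ h]].
  exists (v :: r).
    rewrite TPE eqxx hl eqxx eq_sym hkv hne' hu' hnc' hpw /= andbT.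
    apply/allP => d hd; have /andP[hdD hcd'] := hcd d hd; rewrite /diagOK hdD /= crossC.
    by have /andP[h1 h2] := noret d hd; apply: (oG1 hc hcd' (Dnc' htv hdD) (allP hpw1 d hd)).
  case: r hq hl hu {hne hnc hdg hpw hpw1 hcd noret hne' hu' hnc'} => [|a r'] hq hl hu.
    by move: hl hkv => /= ->; rewrite eqxx.
  rewrite /fA /=; case: eqP => // eat; subst a.
  have e : eset (v, t) = eset (t, v) by rewrite /eset setUC.
  by move: hu; rewrite steps2 /= e => /and3P[_]; rewrite inE eqxx.
have hcb : crosses_before k t v t z by apply: (implyP (hf _ htz)); rewrite crossC.
have hvt : v != t by rewrite eq_sym.
have hvz : v != z by rewrite eq_sym.
have hitz : cross i k t z by rewrite crossC.
have hs := oGs hc hitz (Dnc htv htz) hcb hvt hvz.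
have noret : forall d, d \in oddel (steps (z :: r)) -> (v != d.1) && (v != d.2).
  by move=> d hd; apply: (oGex (allP hpw1 d hd) hvt hvz hs).
have vnr : v \notin z :: r.
  rewrite inE negb_or hvz /=; apply/negP => hv.
  have /orP[] := VL z hv; first by rewrite hl eq_sym (negbTE hkv).
  by case/hasP => d /noret /andP[/negbTE -> /negbTE ->].
have hS := notin_steps vnr.
have hcz : cross t z v k.
  by rewrite crossC; apply: (oG1 hc hitz (Dnc htv htz) hcb hvt hvz).
have hdg' : all (diagOK D v k) (oddel (steps (z :: r))).
  apply/allP => d hd; have /andP[hdD hcd'] := hcd d hd; rewrite /diagOK hdD /= crossC.
  have /andP[h1 h2] := noret d hd.
  by apply: (oG1 hc hcd' (Dnc' htv hdD) _ h1 h2); apply: (implyP (hf d hdD)).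
exists [:: v, t, z & r]; last by rewrite /fA /= eqxx.
rewrite TPE steps2 steps2.
have E : steps (z :: r) = pairmap pair z r by [].
rewrite E in hne hu hnc hS hdg' *.
move: (pairmap pair z r) hne hu hnc hpw hpw1 hS hdg' => S hne hu hnc hpw hpw1 hS hdg'.
rewrite /= eqxx hl eqxx eq_sym hkv hvt hpw1 hpw hdg' /= (D_ncD (Dsym htv)) /diagOK htz /= hcz !andbT /=.
rewrite /= in hne hu hnc; move: hne hu hnc => /andP[_ h1] /and3P[_ h2 h3] /andP[_ h4].
rewrite h1 h2 h3 h4 !andbT.
apply: (@eset_notin v _ ((t, z) :: S)) => [e|]; last by rewrite /eset !inE eqxx.
rewrite inE => /orP[/eqP->|he]; [by rewrite /= hvt hvz | exact: hS].
Qed.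



Lemma nth_fA i t p : nth i (fA i t p) 1 = t.
Proof. by rewrite /fA; case: eqP => [<-|] //=; case: p => [|x [|y s]]. Qed.

Lemma fA_inj i k t v p1 p2 : TP D v k p1 -> TP D v k p2 -> fA i t p1 = fA i t p2 -> p1 = p2.
Proof.
case: p1 => [|x1 s1] // h1; case: p2 => [|x2 s2] // h2.
have e1 := TP_hd h1; have e2 := TP_hd h2; subst x1 x2.
have bad : forall s, TP D v k [:: v, t, v & s] -> False.
  move=> s hs; have := TP_u hs; rewrite /= => /andP[].
  have e : eset (t, v) = eset (v, t) by rewrite /eset setUC.
  by rewrite e inE eqxx.
rewrite /fA /=.
case: eqP => [ea|na]; case: eqP => [eb|nb] //=.
- by case=> ->.
- case: s1 h1 ea => [|a s1] // h1 ea; case=> ea2 es.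
  by rewrite ea2 es in h1; case: (bad _ h1).
- case: s2 h2 eb => [|a s2] // h2 eb; case=> ea2 es.
  by rewrite -ea2 -es in h2; case: (bad _ h2).
- by case=> ->.
Qed.

Lemma TP_size i k p : TP D i k p -> size p < NN n.
Proof.
case: p => [|x s] // h.
have hu := TP_u h.
have : size (map eset (steps (x :: s))) <= size [seq eset e | e <- enum [set: 'I_n * 'I_n]].
  apply: uniq_leq_size hu _ => S /mapP[e _ ->]; apply/mapP; exists e => //.
  by rewrite mem_enum inE.
rewrite !size_map size_pairmap -cardE cardsT card_prod card_ord /NN /= => hs.
by rewrite ltnS ltnS.
Qed.

Definition Ps i k := [seq p <- AllS n (NN n) | TP D i k p].

Lemma mem_Ps i k p : (p \in Ps i k) = TP D i k p.
Proof.
rewrite mem_filter mem_AllS; case h: (TP D i k p) => //=.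
exact: TP_size h.
Qed.

Lemma uniq_Ps i k : uniq (Ps i k).
Proof. exact/filter_uniq/uniq_AllS. Qed.

Lemma Ps_perm i k t v : first i k t v ->
  perm_eq (Ps i k) (map (fA i t) (Ps v k) ++ map (fA i v) (Ps t k)).
Proof.
move=> hf; have hf' := first_sym hf.
have /and3P[htv hc _] := hf.
have /and5P[hik hit hiv hkt /andP[hkv htv']] := cross_neq hc.
apply: uniq_perm; first exact: uniq_Ps.
  rewrite cat_uniq !map_inj_in_uniq ?uniq_Ps //=.
  - rewrite andbT; apply/hasP => -[q /mapP[p2 _ ->] /mapP[p1 _]] /(congr1 (fun q => nth i q 1)).
    by rewrite !nth_fA => /eqP; rewrite eq_sym (negbTE htv').
  - by move=> p1 p2; rewrite !mem_Ps => h1 h2; apply: fA_inj h1 h2.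
  - by move=> p1 p2; rewrite !mem_Ps => h1 h2; apply: fA_inj h1 h2.
move=> q; rewrite mem_cat mem_Ps; apply/idP/orP.
  move=> hq; have /orP[ht|hv] := firststep hf hq.
    by left; have [p hp ->] := complete hf hq ht; apply: map_f; rewrite mem_Ps.
  by right; have [p hp ->] := complete hf' hq hv; apply: map_f; rewrite mem_Ps.
by case=> /mapP[p]; rewrite mem_Ps => hp ->; [apply: sound hf hp | apply: sound hf' hp].
Qed.

Lemma Ps_nocross i k : i != k -> [forall d in D, ~~ cross i k d.1 d.2] ->
  perm_eq (Ps i k) [:: [:: i; k]].
Proof.
move=> hik hnc; apply: uniq_perm => //; first exact: uniq_Ps.
move=> q; rewrite mem_Ps inE; apply/idP/eqP => [|->].
  case: q => [|x s] // hq; have hx := TP_hd hq; subst x.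
  case: s hq => [|y s] hq; first by move: (TP_last hq) hik => /= ->; rewrite eqxx.
  case: s hq => [|z s] hq; first by have /= -> := TP_last hq.
  have := TP_dg hq; rewrite steps2 steps2 /= => /andP[/andP[hyz /= hc] _].
  by move/forall_inP: hnc => /(_ _ hyz) /=; rewrite crossC hc.
by rewrite TPE /= !eqxx hik /= !andbT; exact: hnc.
Qed.


Definition mu i k := #|[set d in D | cross i k d.1 d.2]|.

Lemma mu_lt_vk i k t v : (t, v) \in D -> cross i k t v -> mu v k < mu i k.
Proof.
move=> htv hc; apply: proper_card; apply/properP; split.
  apply/subsetP => d; rewrite !inE => /andP[hd h]; rewrite hd /=.
  exact: (oG2 hc (Dnc' htv hd)).
exists (t, v); first by rewrite inE htv hc.
rewrite inE /= negb_and; apply/orP; right; apply/negP => /cross_neq.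
by rewrite eqxx !andbF.
Qed.

Lemma mu_lt_it i k t v : (t, v) \in D -> cross i k t v -> mu i t < mu i k.
Proof.
move=> htv hc; apply: proper_card; apply/properP; split.
  apply/subsetP => d; rewrite !inE => /andP[hd h]; rewrite hd /=.
  exact: (oG8 hc (Dnc' htv hd)).
exists (t, v); first by rewrite inE htv hc.
rewrite inE /= negb_and; apply/orP; right; apply/negP => /cross_neq.
by rewrite eqxx /= !andbF.
Qed.

Definition sd i (d : 'I_n * 'I_n) :=
  #|[set x | (x != d.1) && (x != d.2) && (cyc3 d.1 x d.2 == cyc3 d.1 i d.2)]|.

Lemma exists_first i k : ~~ [forall d in D, ~~ cross i k d.1 d.2] -> exists t v, first i k t v.
Proof.
move/forall_inPn => [d0 hd0 /negPn hc0].
pose P d := (d \in D) && cross i k d.1 d.2.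
have P0 : P d0 by rewrite /P hd0 hc0.
case: (arg_minnP (sd i) P0) => [[t v]] /andP[htv hc] hmin.
exists t, v; rewrite /first htv hc /=.
apply/forall_inP => d hd; apply/implyP => hcd; apply/negPn/negP => hncb.
have := hmin d; rewrite /P hd hcd => /(_ isT); apply/negP; rewrite -ltnNge.
case: d hd hcd hncb => a b hd /= hcd hncb.
apply: proper_card; apply/properP; split.
  apply/subsetP => x; rewrite !inE /= => /andP[/andP[h1 h2] h3].
  exact: (oGm hc hcd (Dnc htv hd) hncb h1 h2 h3).
have := oGm2 hc hncb => /orP[/andP[/andP[h1 h2] h3]|/andP[/andP[h1 h2] h3]].
  by exists a; rewrite !inE /= ?h1 ?h2 ?h3 ?eqxx.
by exists b; rewrite !inE /= ?h1 ?h2 ?h3 ?eqxx ?andbF.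
Qed.

Section Ring.
Variable R : unitRingType.
Variable c : 'I_n -> 'I_n -> R.
Local Open Scope ring_scope.

Definition wlo (S : seq ('I_n * 'I_n)) : R :=
  if S is e' :: S' then (c e'.2 e'.1)^-1 * wl c S' else 1.

Lemma wl_cons e S : wl c (e :: S) = c e.1 e.2 * wlo S.
Proof. by case: S => [|e' S] /=; rewrite ?mulr1 ?mulrA. Qed.

Lemma wl_fA i k t v p : c v t \is a GRing.unit -> TP D v k p ->
  wl c (steps (fA i t p)) = c i t * (c v t)^-1 * wl c (steps p).
Proof.
move=> hu; case: p => [|x s] // hp; have hx := TP_hd hp; subst x.
case: s hp => [|y s] hp; first by move: (TP_last hp) (TP_ik hp) => /= ->; rewrite eqxx.
rewrite /fA [nth _ _ 1]/=; case: eqP => [eyt|nyt].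
  subst y; rewrite [behead _]/= !steps2 !wl_cons [(i, t).1]/= [(i, t).2]/= [(v, t).1]/= [(v, t).2]/=.
  by rewrite mulrA divrK.
by rewrite steps2 steps2 wl_cons2.
Qed.

Lemma Tsum_Ps i k : Tsum D c i k = \sum_(p <- Ps i k) wl c (steps p).
Proof. by rewrite /Ps big_filter Tsum_seq. Qed.

Lemma Tsum_first i k t v : first i k t v -> c v t \is a GRing.unit -> c t v \is a GRing.unit ->
  Tsum D c i k = c i t * (c v t)^-1 * Tsum D c v k + c i v * (c t v)^-1 * Tsum D c t k.
Proof.
move=> hf hu1 hu2.
rewrite !Tsum_Ps (perm_big _ (Ps_perm hf)) big_cat !big_map !mulr_sumr.
congr (_ + _); apply: eq_big_seq => p; rewrite mem_Ps => hp; [exact: (wl_fA _ hu1 hp) | exact: (wl_fA _ hu2 hp)].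
Qed.

Lemma Tsum_nocross i k : i != k -> [forall d in D, ~~ cross i k d.1 d.2] -> Tsum D c i k = c i k.
Proof.
move=> hik hnc; rewrite Tsum_Ps.
by rewrite (perm_big _ (Ps_nocross hik hnc)) big_seq1.
Qed.

Lemma dir1 : weak_frieze D c -> forall i k, i != k -> c i k = Tsum D c i k.
Proof.
case=> hu hrel.
suff H : forall m i k, mu i k = m -> i != k -> c i k = Tsum D c i k.
  by move=> i k; apply: H.
elim/ltn_ind=> m IH i k hm hik.
case: (boolP [forall d in D, ~~ cross i k d.1 d.2]) => hnc.
  by rewrite Tsum_nocross.
have [t [v hf]] := exists_first hnc; have /and3P[htv hc _] := hf.
have /and5P[_ _ _ hkt /andP[hkv _]] := cross_neq hc.
rewrite (Tsum_first hf (hu _ _ (Dsym htv)) (hu _ _ htv)) (hrel i k t v htv (Dsym htv) hc).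
rewrite -(IH (mu v k) _ v k erefl); last by rewrite eq_sym.
  rewrite -(IH (mu t k) _ t k erefl) //; last by rewrite eq_sym.
  by rewrite -hm; apply: (mu_lt_vk (Dsym htv)); rewrite crossSr.
by rewrite -hm; apply: mu_lt_vk htv hc.
Qed.

Definition REL i k t v := c i k = c i t * (c v t)^-1 * c v k + c i v * (c t v)^-1 * c t k.

Lemma REL_sym i k t v : REL i k t v -> REL i k v t.
Proof. by rewrite /REL addrC. Qed.

Lemma dir2 : (forall t v, (t, v) \in D -> c t v \is a GRing.unit) ->
  (forall i k, i != k -> c i k = Tsum D c i k) ->
  forall i k t v, (t, v) \in D -> cross i k t v -> REL i k t v.
Proof.
move=> hu hT.
suff H : forall m i k, mu i k = m -> forall t v, (t, v) \in D -> cross i k t v -> REL i k t v.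
  by move=> i k; apply: H.
elim/ltn_ind=> m IH0 i k hm.
have IH : forall i' k', (mu i' k' < mu i k)%N -> forall t v, (t, v) \in D -> cross i' k' t v -> REL i' k' t v.
  by move=> i' k' hlt; apply: (IH0 (mu i' k')) => //; rewrite -hm.
move=> t v htv hc.
have hnc : ~~ [forall d in D, ~~ cross i k d.1 d.2].
  by apply/forall_inPn; exists (t, v) => //=; rewrite hc.
have [t1 [v1 hf]] := exists_first hnc; have /and3P[htv1 hc1 hfa] := hf.
have /and5P[hik hit1 hiv1 hkt1 /andP[hkv1 htv1']] := cross_neq hc1.
have R1 : REL i k t1 v1.
  rewrite /REL (hT _ _ hik) (Tsum_first hf (hu _ _ (Dsym htv1)) (hu _ _ htv1)).
  by rewrite -(hT v1 k) 1?eq_sym // -(hT t1 k) 1?eq_sym.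
have Shared : forall t v1 v, first i k t v1 -> REL i k t v1 -> (t, v) \in D -> cross i k t v ->
    v != v1 -> REL i k t v.
  move=> {t v htv hc hnc t1 v1 hf htv1 hc1 hfa hit1 hiv1 hkt1 hkv1 htv1' R1}.
  move=> t v1 v hf R1 htv hc hvv1.
  have /and3P[htv1 hc1 /forall_inP hfa] := hf.
  have /and5P[_ hit hiv1 hkt /andP[hkv1 htv1']] := cross_neq hc1.
  have /and5P[_ _ hiv _ /andP[hkv htv']] := cross_neq hc.
  have hcb : crosses_before k t v1 t v by apply: (implyP (hfa _ htv)).
  have Rv1k : REL v1 k t v.
    apply: (IH _ _ (mu_lt_vk htv1 hc1) _ _ htv).
    by apply: (oG1 hc1 hc (Dnc htv1 htv) hcb); rewrite // eq_sym.
  have hcb' : crosses_before k t v1 v t by apply: (implyP (hfa _ (Dsym htv))); rewrite crossSr.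
  have Riv : REL i v t v1.
    apply: (IH _ _ _ _ _ htv1).
      by apply: (mu_lt_it (Dsym htv)); rewrite crossSr.
    apply: (oG7 hc1 _ (Dnc htv1 (Dsym htv)) hcb') => //; first by rewrite crossSr.
    by rewrite eq_sym.
  rewrite /REL in R1 Rv1k Riv *.
  rewrite R1 Rv1k Riv.
  have u1 := hu _ _ (Dsym htv1); have u2 := hu _ _ htv.
  by rewrite !mulrDr !mulrDl !mulrA divrK // mulrK // addrA.
have /and5P[_ hit hiv hkt /andP[hkv htv']] := cross_neq hc.
case: (eqVneq t t1) => [et|nt1].
  subst t1; case: (eqVneq v v1) => [ev|nv]; first by subst v1.
  exact: Shared hf R1 htv hc nv.
case: (eqVneq t v1) => [et|nt2].
  subst v1; case: (eqVneq v t1) => [ev|nv]; first by subst t1; apply: REL_sym.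
  exact: Shared (first_sym hf) (REL_sym R1) htv hc nv.
case: (eqVneq v t1) => [ev|nv1].
  subst t1; apply: REL_sym; apply: (Shared v v1 t hf R1 (Dsym htv) _ nt2).
  by rewrite crossSr.
case: (eqVneq v v1) => [ev|nv2].
  subst v1; apply: REL_sym; apply: (Shared v t1 t (first_sym hf) (REL_sym R1) (Dsym htv) _ nt1).
  by rewrite crossSr.
have /and3P[_ hc1' /forall_inP hfa'] := first_sym hf.
move/forall_inP: hfa => hfa.
have cbv : crosses_before k t1 v1 t v by apply: (implyP (hfa _ htv)).
have cbv' : crosses_before k v1 t1 t v by apply: (implyP (hfa' _ htv)).
have hcvt : cross i k v t by rewrite crossSr.
have cbvt : crosses_before k t1 v1 v t by apply: (implyP (hfa _ (Dsym htv))).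
have Rv1k : REL v1 k t v.
  apply: (IH _ _ (mu_lt_vk htv1 hc1) _ _ htv).
  by apply: (oG1 hc1 hc (Dnc htv1 htv) cbv); rewrite eq_sym.
have Rt1k : REL t1 k t v.
  apply: (IH _ _ (mu_lt_vk (Dsym htv1) hc1') _ _ htv).
  by apply: (oG1 hc1' hc (Dnc (Dsym htv1) htv) cbv'); rewrite eq_sym.
have Rit : REL i t t1 v1.
  apply: (IH _ _ (mu_lt_it htv hc) _ _ htv1).
  exact: (oG7 hc1 hc (Dnc htv1 htv) cbv nt1 nt2).
have Riv : REL i v t1 v1.
  apply: (IH _ _ (mu_lt_it (Dsym htv) hcvt) _ _ htv1).
  exact: (oG7 hc1 hcvt (Dnc htv1 (Dsym htv)) cbvt nv1 nv2).
rewrite /REL in R1 Rv1k Rt1k Rit Riv *.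
rewrite R1 Rv1k Rt1k Rit Riv !mulrDr !mulrDl !mulrA.
by rewrite addrACA.
Qed.

End Ring.

End Comb.

Local Open Scope ring_scope.
Theorem theoremB (R : unitRingType) (n : nat) (hn : (3 <= n)%N)
    (D : {set 'I_n * 'I_n}) (hD : dissection D) (c : 'I_n -> 'I_n -> R) :
  weak_frieze D c <->
  ((forall t v, (t, v) \in D -> c t v \is a GRing.unit) /\
   (forall i k : 'I_n, i != k -> c i k = Tsum D c i k)).
Proof.
split.
  move=> hw; split; first by case: hw.
  exact: (@dir1 n D hD R c hw).
case=> hu hT; split => // i k t v htv _ hc.
exact: (@dir2 n D hD R c hu hT i k t v htv hc).
Qed.
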